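(* For every hypergraph $\mathcal{H}$ we have $\tau_2(\mathcal{H})/2\le \mathrm{dec}(\mathcal{H})\le \tau_2(\mathcal{H})-1$, and both bounds are tight (each holds with equality for some hypergraphs). In particular, $\tau_2(\mathcal{H})$ is a 2-approximation for $\mathrm{dec}(\mathcal{H})$.
   Context: A hypergraph $\mathcal{H}=(X,\mathcal{E})$ has a finite vertex set $X$, $|X|=n$, and a family of edges, each a subset of $X$ with at least 2 vertices. A C-coloring is a map $\varphi:X\to\mathbb{N}$ such that every edge contains two distinct vertices of the same color; $\overline{\chi}(\mathcal{H})$ is the maximum number of colors used by a C-coloring and $\mathrm{dec}(\mathcal{H})=n-\overline{\chi}(\mathcal{H})$. $\tau_2(\mathcal{H})$ is the minimum size of a set $T\subseteq X$ with $|E\cap T|\ge2$ for every edge $E$. *)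

(* Defs.v *)
From mathcomp Require Import all_boot.
From Stdlib Require Import ClassicalEpsilon.
Set Implicit Arguments.
Unset Strict Implicit.
Unset Printing Implicit Defensive.

Definition is_hypergraph (X : finType) (E : {set {set X}}) : Prop :=
  forall e, e \in E -> 2 <= #|e|.

Definition ncolors (X : finType) (phi : X -> nat) : nat :=
  size (undup [seq phi x | x <- enum X]).

Definition C_coloring (X : finType) (E : {set {set X}}) (phi : X -> nat) : Prop :=
  forall e, e \in E ->
    exists x y, [/\ x \in e, y \in e, x != y & phi x = phi y].

Definition uses_colors (X : finType) (E : {set {set X}}) (k : nat) : bool :=
  if excluded_middle_informative
       (exists phi : X -> nat, C_coloring E phi /\ ncolors phi = k)
  then true else false.

(* Upper chromatic number: maximum number of colors of a C-coloring.
   Since a coloring uses at most #|X| colors, the max over k <= #|X| is the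
   max over all C-colorings. *)
Definition chibar (X : finType) (E : {set {set X}}) : nat :=
  \max_(k < #|X|.+1 | uses_colors E k) k.

Definition dec (X : finType) (E : {set {set X}}) : nat := #|X| - chibar E.

(* tau_2: minimum size of T with |e :&: T| >= 2 for every edge e
   (default #|X| is attained by T = X for a hypergraph). *)
Definition tau2 (X : finType) (E : {set {set X}}) : nat :=
  \big[minn/#|X|]_(T : {set X} | [forall e in E, 2 <= #|e :&: T|]) #|T|.

(* Main.v *)
Require Import Defs.
From mathcomp Require Import all_boot.
From mathcomp Require Import zify.
From Stdlib Require Import ClassicalEpsilon.
Set Implicit Arguments.
Unset Strict Implicit.
Unset Printing Implicit Defensive.

Section Aux.
Variable X : finType.

Lemma ncolors_card (phi : X -> nat) (R : {set X}) :
  {in R &, injective phi} -> (forall x, exists2 y, y \in R & phi y = phi x) ->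
  ncolors phi = #|R|.
Proof.
move=> inj sur; rewrite /ncolors cardE.
rewrite -(size_map phi); apply: perm_size; apply: uniq_perm.
- exact: undup_uniq.
- rewrite map_inj_in_uniq ?enum_uniq // => a b; rewrite !mem_enum; exact: inj.
move=> z; rewrite mem_undup; apply/mapP/mapP => [[x _ ->]|[y _ ->]].
- by have [y yR <-] := sur x; exists y; rewrite ?mem_enum.
- by exists y; rewrite ?mem_enum.
Qed.

Lemma uses_colorsT (E : {set {set X}}) phi :
  C_coloring E phi -> uses_colors E (ncolors phi).
Proof.
move=> C; rewrite /uses_colors; case: excluded_middle_informative => // H.
by exfalso; apply: H; exists phi.
Qed.

Lemma uses_colorsP (E : {set {set X}}) k :
  uses_colors E k -> exists phi, C_coloring E phi /\ ncolors phi = k.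
Proof. by rewrite /uses_colors; case: excluded_middle_informative. Qed.

Lemma ncolors_le (phi : X -> nat) : ncolors phi <= #|X|.
Proof.
rewrite /ncolors cardE -(size_map phi).
apply: leq_trans (size_undup _) _; by rewrite size_map.
Qed.

Lemma tau2_le (E : {set {set X}}) (T : {set X}) :
  [forall e in E, 2 <= #|e :&: T|] -> tau2 E <= #|T|.
Proof.
move=> H; rewrite /tau2.
have : T \in index_enum {set X} by rewrite /index_enum -enumT mem_enum.
elim: (index_enum _) => [|a s IH] //; rewrite inE big_cons => /orP [/eqP <-|/IH h].
  by rewrite H geq_minl.
by case: ifP => // _; rewrite /minn; case: ifP => // /ltnW /leq_trans; apply.
Qed.

Lemma tau2_leX (E : {set {set X}}) : tau2 E <= #|X|.
Proof.
rewrite /tau2; apply: (big_ind (fun m => m <= #|X|)) => //.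
- by move=> a b Ha Hb; rewrite /minn; case: ifP.
- by move=> T _; apply: max_card.
Qed.

Lemma chibar_ge (E : {set {set X}}) phi :
  C_coloring E phi -> ncolors phi <= chibar E.
Proof.
move=> C; rewrite /chibar.
have Hk : ncolors phi < #|X|.+1 by rewrite ltnS ncolors_le.
exact: (leq_bigmax_cond (Ordinal Hk) (uses_colorsT C)).
Qed.

End Aux.

Lemma part1 (X : finType) (E : {set {set X}}) :
  is_hypergraph E -> tau2 E <= 2 * dec E.
Proof.
move=> hE; rewrite /dec /chibar.
apply: (big_ind (fun m => tau2 E <= 2 * (#|X| - m))).
- by rewrite subn0; apply: leq_trans (tau2_leX E) _; lia.
- by move=> a b Ha Hb; rewrite /maxn; case: ifP.
move=> [k hk] /= /uses_colorsP [phi [C Hk]].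
pose R := [set x | [forall y, (phi y == phi x) ==> (enum_rank x <= enum_rank y)]].
pose r x := [arg min_(y < x | phi y == phi x) enum_rank y].
have rP x : r x \in R /\ phi (r x) = phi x.
  rewrite /r; case: arg_minnP => // y /eqP py hy; split => //.
  rewrite inE; apply/forallP => z; apply/implyP => /eqP pz.
  by apply: hy; rewrite pz py.
have inj : {in R &, injective phi}.
  move=> x y; rewrite !inE => /forallP hx /forallP hy pxy.
  apply: enum_rank_inj; apply: val_inj; apply/eqP; rewrite eqn_leq.
  by rewrite (implyP (hx y)) ?pxy // (implyP (hy x)) ?pxy.
have nc : ncolors phi = #|R|.
  by apply: ncolors_card => // x; exists (r x); case: (rP x).
pose T := ~: R :|: [set r x | x in ~: R].
have cT : #|T| <= 2 * (#|X| - k).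
  rewrite -Hk nc -(cardsC R) addKn cardsU.
  apply: leq_trans (leq_subr _ _) _; by rewrite mul2n -addnn leq_add2l leq_imset_card.
apply: leq_trans cT; apply: tau2_le; apply/forall_inP => e eE.
have [x [y [xe ye xy pxy]]] := C e eE.
apply/card_gt1P; exists x, y; split => //; rewrite in_setI ?xe ?ye /= in_setU in_setC.
- case xR: (x \in R) => //=; case yR: (y \in R).
    by rewrite (inj x y) ?eqxx in xy.
  apply/imsetP; exists y; rewrite ?in_setC ?yR //.
  by case: (rP y) => rR rE; apply: inj => //; rewrite rE pxy.
- case yR: (y \in R) => //=; case xR: (x \in R).
    by rewrite (inj x y) ?eqxx in xy.
  apply/imsetP; exists x; rewrite ?in_setC ?xR //.
  by case: (rP x) => rR rE; apply: inj => //; rewrite rE pxy.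
Qed.

Lemma part2_key (X : finType) (E : {set {set X}}) (T : {set X}) :
  E != set0 -> [forall e in E, 2 <= #|e :&: T|] -> dec E <= #|T| - 1.
Proof.
move=> /set0Pn [e0 e0E] /forall_inP H.
have /card_gt1P [x0 [_ [x0T _ _]]] := H e0 e0E.
rewrite in_setI in x0T; case/andP: x0T => _ x0T.
pose phi x := if x \in T then 0 else (enum_rank x).+1.
have nc : ncolors phi = #|x0 |: ~: T|.
  apply: ncolors_card.
  - move=> x y; rewrite !in_setU1 !in_setC /phi.
    case/orP=> [/eqP ->|xT]; case/orP=> [/eqP ->|yT] //; rewrite ?x0T ?(negbTE xT) ?(negbTE yT) //.
    by move=> [] /val_inj /enum_rank_inj.
  - move=> x; case xT: (x \in T).
      by exists x0; rewrite ?setU11 // /phi x0T xT.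
    by exists x; rewrite // in_setU1 in_setC xT orbT.
have C : C_coloring E phi.
  move=> e eE; have /card_gt1P [x [y [xe ye xy]]] := H e eE.
  rewrite !in_setI in xe ye; case/andP: xe => xe xT; case/andP: ye => ye yT.
  by exists x, y; split => //; rewrite /phi xT yT.
have := chibar_ge C; rewrite nc cardsU1 in_setC x0T /=.
have := cardsC T; rewrite /dec; lia.
Qed.

Lemma part2 (X : finType) (E : {set {set X}}) :
  is_hypergraph E -> E != set0 -> dec E <= tau2 E - 1.
Proof.
move=> hE nE; rewrite /tau2.
apply: (big_ind (fun m => dec E <= m - 1)).
- rewrite -cardsT; apply: part2_key => //; apply/forall_inP => e eE.
  by rewrite setIT; apply: hE.
- by move=> a b Ha Hb; rewrite /minn; case: ifP.
- by move=> T; apply: part2_key.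
Qed.

Theorem proposition1 :
  (forall (X : finType) (E : {set {set X}}),
      is_hypergraph E -> tau2 E <= 2 * dec E)
  /\ (forall (X : finType) (E : {set {set X}}),
      is_hypergraph E -> E != set0 -> dec E <= tau2 E - 1)
  /\ (exists (X : finType) (E : {set {set X}}),
      [/\ is_hypergraph E, E != set0 & tau2 E = 2 * dec E])
  /\ (exists (X : finType) (E : {set {set X}}),
      [/\ is_hypergraph E, E != set0 & dec E = tau2 E - 1]).
Proof.
have hE : is_hypergraph [set [set: bool]].
  by move=> e; rewrite in_set1 => /eqP ->; rewrite cardsT card_bool.
have nE : [set [set: bool]] != set0 by apply/set0Pn; exists setT; rewrite in_set1.
have h1 := part1 hE; have h2 := part2 hE nE.
have h3 : tau2 [set [set: bool]] <= 2 by rewrite -card_bool tau2_leX.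
split; first exact: part1.
split; first exact: part2.
split; exists bool, [set [set: bool]]; split => //; lia.
Qed.
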